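(* Let $A\in\mathbb{C}^{n\times n}$, $B\in\mathbb{C}^{n\times m}$, $C\in\mathbb{C}^{p\times n}$, $D\in\mathbb{C}^{p\times m}$, $F\in\mathbb{C}^{\nu\times\nu}$ with $\mathrm{eig}(A)\cap\mathrm{eig}(F)=\emptyset$, and let $H\in\mathbb{C}^{m\times\nu}$ be such that $(F,H)$ is observable. Let $\hat B\in\mathbb{C}^{\nu\times m}$ and $\hat D\in\mathbb{C}^{p\times m}$, and define $\hat A=F-\hat BH$ and $\hat C=\mathcal{C}_{\rm p}(H)-\hat DH$. Suppose $\mathrm{eig}(\hat A)\cap\mathrm{eig}(F)=\emptyset$ and that the matrix $$\begin{bmatrix}F-\lambda I_\nu & \hat B\\ \mathcal{C}_{\rm p}(H) & \hat D\end{bmatrix}$$ has full column rank for every $\lambda\in\mathrm{eig}(\hat A)$. Then the pair $(\hat A,\hat C)$ is observable.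
   Context: The primal SSC operator: for $H\in\mathbb{C}^{m\times\nu}$, $\mathcal{C}_{\rm p}(H)=C\Pi+DH$, where $\Pi\in\mathbb{C}^{n\times\nu}$ is the unique solution of $\Pi F-A\Pi=BH$. *)

(* Defs.v *)
From HB Require Import structures.
From mathcomp Require Import all_boot all_order all_algebra.
From mathcomp Require Import complex.
From mathcomp Require Import reals.
Set Implicit Arguments. Unset Strict Implicit. Unset Printing Implicit Defensive.
Import Order.TTheory GRing.Theory Num.Theory.
Local Open Scope ring_scope.

Definition obsmx (K : fieldType) (nu m : nat) (F : 'M[K]_nu) (H : 'M[K]_(m, nu))
  : 'M[K]_(\sum_(i < nu) m, nu) :=
  \mxcol_(i < nu) (H *m F ^+ i).

Definition observable (K : fieldType) (nu m : nat) (F : 'M[K]_nu) (H : 'M[K]_(m, nu)) : Prop :=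
  \rank (obsmx F H) = nu.

Definition eig_disjoint (K : fieldType) (n k : nat) (A : 'M[K]_n) (F : 'M[K]_k) : Prop :=
  forall lambda : K, eigenvalue A lambda -> ~~ eigenvalue F lambda.

(* Primal SSC operator C_p(H) = C Pi + D H, where Pi solves Pi F - A Pi = B H
   (the solution Pi is passed explicitly; it is unique when eig A, eig F disjoint). *)
Definition Cp (K : fieldType) (n m p nu : nat) (C : 'M[K]_(p, n)) (D : 'M[K]_(p, m))
  (Pi : 'M[K]_(n, nu)) (H : 'M[K]_(m, nu)) : 'M[K]_(p, nu) :=
  C *m Pi + D *m H.

(* Main.v *)
Require Import Defs.
From HB Require Import structures.
From mathcomp Require Import all_boot all_order all_algebra.
From mathcomp Require Import complex.
From mathcomp Require Import reals.
Import Order.TTheory GRing.Theory Num.Theory.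
Local Open Scope ring_scope.
Local Open Scope complex_scope.

Lemma pow_kill (K : fieldType) n' p (A : 'M[K]_n'.+1) (C : 'M[K]_(p, n'.+1))
  (y : 'cV[K]_(n'.+1)) :
  (forall i, (i < n'.+1)%N -> C *m A ^+ i *m y = 0) ->
  forall k, C *m A ^+ k *m y = 0.
Proof.
move=> h k.
have e : A ^+ k = horner_mx A ('X^k %% char_poly A).
  rewrite -{1}(horner_mx_X A) -rmorphXn /=.
  rewrite {1}(divp_eq 'X^k (char_poly A)) rmorphD rmorphM /= Cayley_Hamilton.
  by rewrite mulr0 add0r.
set q := _ %% _ in e.
have sq : (size q <= n'.+1)%N.
  by rewrite -ltnS -(size_char_poly A) ltn_modp -size_poly_eq0 size_char_poly.
rewrite e -(coefK q) poly_def linear_sum /= mulmx_sumr mulmx_suml big1 // => i _.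
rewrite linearZ /= rmorphXn /= horner_mx_X -scalemxAr -scalemxAl h ?scaler0 //.
exact: leq_trans (ltn_ord i) sq.
Qed.

Lemma eigenvalue_tr (K : fieldType) n (A : 'M[K]_n) a :
  eigenvalue A^T a = eigenvalue A a.
Proof.
rewrite /eigenvalue /eigenspace -!mxrank_eq0 !mxrank_ker.
by rewrite -(mxrank_tr (A - a%:M)) raddfB /= tr_scalar_mx.
Qed.

Lemma key (K : numClosedFieldType) nu' m p (Ah : 'M[K]_nu'.+1)
  (Ch : 'M[K]_(p, nu'.+1)) (F : 'M[K]_nu'.+1) (Bh : 'M[K]_(nu'.+1, m))
  (H : 'M[K]_(m, nu'.+1)) (Cpm : 'M[K]_(p, nu'.+1)) (Dh : 'M[K]_(p, m)) :
  Ah = F - Bh *m H -> Ch = Cpm - Dh *m H ->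
  (forall lambda : K, eigenvalue Ah lambda ->
     \rank (block_mx (F - lambda%:M) Bh Cpm Dh) = (nu'.+1 + m)%N) ->
  \rank (obsmx Ah Ch) = nu'.+1.
Proof.
move=> eAh eCh hrank.
apply/eqP; rewrite eqn_leq rank_leq_col /= leqNgt; apply/negP => hlt.
set M := obsmx Ah Ch.
set S := kermx M^T.
have hS : forall w : 'rV_nu'.+1, (w <= S)%MS <->
    forall i : 'I_nu'.+1, Ch *m Ah ^+ i *m w^T = 0.
  move=> w; split => [/sub_kermxP h i | h].
    have := congr1 trmx h; rewrite trmx_mul trmxK trmx0 /M /obsmx mxcol_mul.
    by move=> /(congr1 (fun X => submxcol X i)); rewrite mxcolK submxcol0.
  apply/sub_kermxP; apply: trmx_inj; rewrite trmx_mul trmxK trmx0 /M /obsmx.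
  by rewrite mxcol_mul -(mxcol0 (p_ := fun _ => p)); apply: eq_mxcol.
have hall : forall w : 'rV_nu'.+1, (w <= S)%MS -> forall k, Ch *m Ah ^+ k *m w^T = 0.
  move=> w wS; have h := proj1 (hS w) wS; apply: pow_kill => i hi.
  exact: (h (Ordinal hi)).
have stab : stablemx S Ah^T.
  apply/row_subP => j; rewrite row_mul; apply/(hS _) => i.
  rewrite trmx_mul trmxK mulmxA -(mulmxA Ch) mulmxE -exprSr.
  by apply: hall; apply: row_sub.
have S0 : S != 0.
  by rewrite -mxrank_eq0 mxrank_ker mxrank_tr subn_eq0 -ltnNge.
set V := row_base S.
have rpos : (0 < \rank S)%N by rewrite lt0n mxrank_eq0.
have [a ha] := eigenvalue_closed (conjmx V Ah^T) rpos.
case/eigenvalueP: ha => v hv vn0.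
have xe : (v *m V <= eigenspace Ah^T a)%MS.
  rewrite -sub_eigenspace_conjmx ?stablemx_row_base ?row_base_free //.
  exact/eigenspaceP.
set x := v *m V in xe.
have xn0 : x != 0 by rewrite mulmx_free_eq0 ?row_base_free.
have xS : (x <= S)%MS.
  by apply: (submx_trans (submxMl v V)); rewrite /V eq_row_base.
move/eigenspaceP: (xe) => xe'.
set y := x^T.
have ye : Ah *m y = a *: y.
  by rewrite -[Ah]trmxK -trmx_mul xe' linearZ.
have yC : Ch *m y = 0.
  by have := hall x xS 0%N; rewrite expr0 mulmx1.
have eA : eigenvalue Ah a.
  by rewrite -eigenvalue_tr; apply/eigenvalueP; exists x.
have hr := hrank a eA.
set Blk := block_mx _ _ _ _ in hr.
set z := col_mx y (- (H *m y)).
have Bz : Blk *m z = 0.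
  rewrite /Blk /z mul_block_col.
  have -> : (F - a%:M) *m y + Bh *m - (H *m y) = 0.
    rewrite mulmxBl mul_scalar_mx -ye eAh mulmxBl mulmxN mulmxA.
    by rewrite opprB addrA addrAC subrr add0r subrr.
  have -> : Cpm *m y + Dh *m - (H *m y) = 0.
    by rewrite mulmxN mulmxA -mulmxBl -eCh.
  by rewrite col_mx0.
have rf : row_free Blk^T by rewrite /row_free mxrank_tr hr.
have : z^T *m Blk^T == 0 by rewrite -trmx_mul Bz trmx0.
rewrite mulmx_free_eq0 // -trmx0 (inj_eq trmx_inj) col_mx_eq0 => /andP[/eqP y0 _].
by move: xn0; rewrite -[x]trmxK -/y y0 trmx0 eqxx.
Qed.

Lemma keyG (K : numClosedFieldType) nu m p (Ah : 'M[K]_nu)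
  (Ch : 'M[K]_(p, nu)) (F : 'M[K]_nu) (Bh : 'M[K]_(nu, m))
  (H : 'M[K]_(m, nu)) (Cpm : 'M[K]_(p, nu)) (Dh : 'M[K]_(p, m)) :
  Ah = F - Bh *m H -> Ch = Cpm - Dh *m H ->
  (forall lambda : K, eigenvalue Ah lambda ->
     \rank (block_mx (F - lambda%:M) Bh Cpm Dh) = (nu + m)%N) ->
  \rank (obsmx Ah Ch) = nu.
Proof.
case: nu Ah Ch F Bh H Cpm => [|nu'] Ah Ch F Bh H Cpm.
  by move=> *; apply/eqP; rewrite -leqn0 rank_leq_col.
exact: key.
Qed.

Theorem theorem4 (R : realType) (n m p nu : nat)
  (A : 'M[R[i]]_n) (B : 'M[R[i]]_(n, m)) (C : 'M[R[i]]_(p, n)) (D : 'M[R[i]]_(p, m))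
  (F : 'M[R[i]]_nu) (H : 'M[R[i]]_(m, nu))
  (Pi : 'M[R[i]]_(n, nu))
  (Bh : 'M[R[i]]_(nu, m)) (Dh : 'M[R[i]]_(p, m)) :
  eig_disjoint A F ->
  observable F H ->
  Pi *m F - A *m Pi = B *m H ->
  let Ah := F - Bh *m H in
  let Ch := Cp C D Pi H - Dh *m H in
  eig_disjoint Ah F ->
  (forall lambda : R[i], eigenvalue Ah lambda ->
     \rank (block_mx (F - lambda%:M) Bh (Cp C D Pi H) Dh) = (nu + m)%N) ->
  observable Ah Ch.
Proof.
move=> _ _ _ Ah Ch _ hr; rewrite /observable.
exact: (@keyG _ nu m p Ah Ch F Bh H (Cp C D Pi H) Dh erefl erefl hr).
Qed.
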